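(* Let $G$ be a group with a finite generating set $X$, and let $g\in G$ have infinite order. Then, with respect to the word metric of $X$, $t(g^\infty,g^{-\infty})\ge 1/\sqrt2$, equivalently $s(g^\infty,g^{-\infty})\ge 1/2$.
   Context: $d$ is the word metric of $G$ with respect to $X$ ($d(g,h)$ = length of a shortest word over $X\cup X^{-1}$ representing $g^{-1}h$). For $g$ of infinite order, $g^\infty=\{g^n:n\in\mathbb N\}$ and $g^{-\infty}=(g^{-1})^\infty=\{g^{-n}:n\in\mathbb N\}$. For $\alpha>0$, $c\in\mathbb N$, the $(\alpha,c)$-cone around $g^\infty$ is $\alpha\cdot g^\infty+c=\{v\in G:\exists n\in\mathbb N,\ d(v,g^n)\le\alpha\, d(1,g^n)+c\}$; for a forward orbit $x$ write $x\subseteq\alpha\cdot y+c$ if every element of $x$ lies in the cone around $y$. Define $s(x,y)=\inf\{\alpha>0:\exists c\in\mathbb N,\ x\subseteq\alpha\cdot y+c\text{ and }y\subseteq\alpha\cdot x+c\}$ and $t(x,y)=\sqrt{s(x,y)}$. *)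

(* Defs.v *)
From Stdlib Require Import Reals List Classical ClassicalEpsilon.
Import ListNotations.
Open Scope R_scope.

Record Group := {
  carrier :> Type;
  gmul : carrier -> carrier -> carrier;
  ginv : carrier -> carrier;
  gone : carrier;
  gmul_assoc : forall a b c, gmul a (gmul b c) = gmul (gmul a b) c;
  gmul_1l : forall a, gmul gone a = a;
  gmul_Vl : forall a, gmul (ginv a) a = gone
}.

Section GroupDefs.
Variable G : Group.

Fixpoint gpow (g : G) (n : nat) : G :=
  match n with O => gone G | S k => gmul G g (gpow g k) end.

Definition infinite_order (g : G) : Prop := forall n : nat, (1 <= n)%nat -> gpow g n <> gone G.

Definition letter_val (l : G * bool) : G := if snd l then fst l else ginv G (fst l).

Fixpoint word_val (w : list (G * bool)) : G :=
  match w with [] => gone G | l :: w' => gmul G (letter_val l) (word_val w') end.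

Definition word_over (X : list G) (w : list (G * bool)) : Prop :=
  forall l, In l w -> In (fst l) X.

Definition generates (X : list G) : Prop :=
  forall g : G, exists w, word_over X w /\ word_val w = g.

Definition has_word_len (X : list G) (g : G) (n : nat) : Prop :=
  exists w, word_over X w /\ length w = n /\ word_val w = g.

(* word length |g|_X: the least n such that g is represented by a word of length n
   (well defined as soon as X generates G) *)
Definition word_length (X : list G) (g : G) : nat :=
  epsilon (inhabits 0%nat)
    (fun n => has_word_len X g n /\ forall m, has_word_len X g m -> (n <= m)%nat).

Definition word_dist (X : list G) (g h : G) : nat := word_length X (gmul G (ginv G g) h).

(* forward orbit x = {x n : n ∈ ℕ}, given by its enumeration; v lies in the
   (alpha,c)-cone around y *)
Definition in_cone (X : list G) (alpha : R) (c : nat) (y : nat -> G) (v : G) : Prop :=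
  exists n : nat, INR (word_dist X v (y n)) <= alpha * INR (word_dist X (gone G) (y n)) + INR c.

Definition cone_sub (X : list G) (x : nat -> G) (alpha : R) (y : nat -> G) (c : nat) : Prop :=
  forall k : nat, in_cone X alpha c y (x k).

(* the set whose infimum is s(x,y) *)
Definition s_set (X : list G) (x y : nat -> G) (alpha : R) : Prop :=
  0 < alpha /\ exists c : nat, cone_sub X x alpha y c /\ cone_sub X y alpha x c.

Definition fwd_orbit (g : G) : nat -> G := fun n => gpow g n.
Definition bwd_orbit (g : G) : nat -> G := fun n => gpow (ginv G g) n.

End GroupDefs.

(* Main.v *)
Require Import Defs.
From Stdlib Require Import Reals Lra Lia List Classical ClassicalEpsilon Arith.
Import ListNotations.
Open Scope R_scope.

Lemma mul_Vr (G : Group) (a : G) : gmul G a (ginv G a) = gone G.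
Proof.
  set (b := ginv G a).
  rewrite <- (gmul_1l G (gmul G a b)).
  rewrite <- (gmul_Vl G b) at 1.
  rewrite <- gmul_assoc. rewrite (gmul_assoc G b a b).
  unfold b at 2 3. rewrite gmul_Vl, gmul_1l. apply gmul_Vl.
Qed.

Lemma mul_1r (G : Group) (a : G) : gmul G a (gone G) = a.
Proof. rewrite <- (gmul_Vl G a), gmul_assoc, mul_Vr, gmul_1l. reflexivity. Qed.

Lemma inv_uniq (G : Group) (a b : G) : gmul G a b = gone G -> ginv G a = b.
Proof.
  intro H. rewrite <- (mul_1r G (ginv G a)), <- H, gmul_assoc, gmul_Vl, gmul_1l.
  reflexivity.
Qed.

Lemma inv_inv (G : Group) (a : G) : ginv G (ginv G a) = a.
Proof. apply inv_uniq, gmul_Vl. Qed.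

Lemma inv_mul (G : Group) (a b : G) :
  ginv G (gmul G a b) = gmul G (ginv G b) (ginv G a).
Proof.
  apply inv_uniq. rewrite gmul_assoc, <- (gmul_assoc G a b), mul_Vr, mul_1r, mul_Vr.
  reflexivity.
Qed.

Lemma inv_one (G : Group) : ginv G (gone G) = gone G.
Proof. apply inv_uniq, gmul_1l. Qed.

Lemma mul_cancel (G : Group) (a b c : G) : gmul G a b = gmul G a c -> b = c.
Proof.
  intro H. rewrite <- (gmul_1l G b), <- (gmul_1l G c), <- (gmul_Vl G a),
    <- !gmul_assoc, H. reflexivity.
Qed.

Lemma gpow_add (G : Group) (a : G) m n :
  gpow G a (m + n) = gmul G (gpow G a m) (gpow G a n).
Proof.
  induction m; simpl. now rewrite gmul_1l. now rewrite IHm, gmul_assoc.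
Qed.

Lemma gpow_Sr (G : Group) (a : G) n : gpow G a (S n) = gmul G (gpow G a n) a.
Proof.
  replace (S n) with (n + 1)%nat by lia. rewrite gpow_add. simpl. now rewrite mul_1r.
Qed.

Lemma gpow_inv_cancel (G : Group) (a : G) n :
  gmul G (gpow G a n) (gpow G (ginv G a) n) = gone G.
Proof.
  induction n. simpl; apply gmul_1l.
  rewrite gpow_Sr. simpl.
  rewrite <- gmul_assoc, (gmul_assoc G a (ginv G a)), mul_Vr, gmul_1l. exact IHn.
Qed.

Lemma word_val_app (G : Group) (w1 w2 : list (G * bool)) :
  word_val G (w1 ++ w2) = gmul G (word_val G w1) (word_val G w2).
Proof. induction w1; simpl. now rewrite gmul_1l. now rewrite IHw1, gmul_assoc. Qed.

Definition flipl (G : Group) (l : G * bool) : G * bool := (fst l, negb (snd l)).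

Lemma word_val_inv (G : Group) (w : list (G * bool)) :
  word_val G (rev (map (flipl G) w)) = ginv G (word_val G w).
Proof.
  induction w as [|l w IH]; simpl. now rewrite inv_one.
  rewrite word_val_app, IH, inv_mul. simpl. rewrite mul_1r. f_equal.
  destruct l as [x []]; unfold letter_val; simpl; [reflexivity|now rewrite inv_inv].
Qed.

Lemma exists_min (P : nat -> Prop) : (exists n, P n) ->
  exists n, P n /\ forall m, P m -> (n <= m)%nat.
Proof.
  intros [n Hn]. revert Hn. induction n as [n IH] using lt_wf_ind. intro Hn.
  destruct (classic (exists m, (m < n)%nat /\ P m)) as [[m [Hm1 Hm2]]|Hno].
  - exact (IH m Hm1 Hm2).
  - exists n. split; auto. intros m Hm. destruct (Nat.lt_ge_cases m n); auto.
    exfalso; apply Hno; eauto.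
Qed.

Lemma wl_spec (G : Group) (X : list G) (a : G) : generates G X ->
  has_word_len G X a (word_length G X a) /\
  forall m, has_word_len G X a m -> (word_length G X a <= m)%nat.
Proof.
  intro Hgen. unfold word_length. apply epsilon_spec.
  apply exists_min. destruct (Hgen a) as [w [H1 H2]]. exists (length w), w; auto.
Qed.

Lemma wl_mul (G : Group) (X : list G) (a b : G) : generates G X ->
  (word_length G X (gmul G a b) <= word_length G X a + word_length G X b)%nat.
Proof.
  intro Hgen. destruct (wl_spec G X a Hgen) as [[w1 [O1 [L1 V1]]] _].
  destruct (wl_spec G X b Hgen) as [[w2 [O2 [L2 V2]]] _].
  apply (proj2 (wl_spec G X (gmul G a b) Hgen)). exists (w1 ++ w2). repeat split.
  - intros l Hl. apply in_app_or in Hl. destruct Hl; auto.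
  - rewrite length_app; lia.
  - now rewrite word_val_app, V1, V2.
Qed.

Lemma wl_inv (G : Group) (X : list G) (a : G) : generates G X ->
  (word_length G X (ginv G a) <= word_length G X a)%nat.
Proof.
  intro Hgen. destruct (wl_spec G X a Hgen) as [[w [O [L V]]] _].
  apply (proj2 (wl_spec G X _ Hgen)). exists (rev (map (flipl G) w)). repeat split.
  - intros l Hl. apply in_rev in Hl. apply in_map_iff in Hl. destruct Hl as [l' [<- Hl']].
    simpl. auto.
  - rewrite length_rev, length_map; auto.
  - now rewrite word_val_inv, V.
Qed.

Fixpoint words (G : Group) (X : list G) (n : nat) : list (list (G * bool)) :=
  match n with
  | O => [nil]
  | S n => flat_map (fun w => flat_map (fun x => [(x,true)::w; (x,false)::w]) X)
             (words G X n)
  end.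

Lemma in_words (G : Group) (X : list G) (w : list (G * bool)) :
  word_over G X w -> In w (words G X (length w)).
Proof.
  induction w as [|[x b] w IH]; intro H; simpl. auto.
  apply in_flat_map. exists w. split.
  - apply IH. intros l Hl. apply H. simpl; auto.
  - apply in_flat_map. exists x. split.
    + apply (H (x,b)). simpl; auto.
    + destruct b; simpl; auto.
Qed.

Lemma avoid (G : Group) (h : G) : infinite_order G h -> forall V : list G,
  exists N, forall j, (N <= j)%nat -> ~ In (gpow G h j) V.
Proof.
  intros Hinf V. induction V as [|a V [N HN]].
  - exists O. simpl; auto.
  - destruct (classic (exists j, gpow G h j = a)) as [[j Hj]|Hno].
    + exists (Nat.max N (S j)). intros i Hi [Hin|Hin].
      * subst a. destruct (Nat.lt_trichotomy i j) as [Hl|[He|Hl]]; try lia.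
        replace i with (j + (i - j))%nat in Hin by lia.
        rewrite gpow_add in Hin.
        assert (E : gmul G (gpow G h j) (gpow G h (i - j)) = gmul G (gpow G h j) (gone G))
          by now rewrite mul_1r.
        apply mul_cancel in E. apply (Hinf (i - j)%nat); auto; lia.
      * apply (HN i); auto; lia.
    + exists N. intros i Hi [Hin|Hin]; eauto. apply (HN i); auto.
Qed.

Lemma bounded_eventually (G : Group) (X : list G) (h : G) : generates G X ->
  infinite_order G h -> forall T : nat,
  exists N, forall j, (N <= j)%nat -> (T < word_length G X (gpow G h j))%nat.
Proof.
  intros Hgen Hinf T.
  destruct (avoid G h Hinf (map (word_val G) (flat_map (words G X) (seq 0 (S T)))))
    as [N HN].
  exists N. intros j Hj. destruct (Nat.lt_ge_cases T (word_length G X (gpow G h j)))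
    as [Hl|Hl]; auto. exfalso. apply (HN j Hj).
  destruct (wl_spec G X (gpow G h j) Hgen) as [[w [O [L V]]] _].
  apply in_map_iff. exists w. split; auto. apply in_flat_map. exists (length w).
  split. apply in_seq; lia. now apply in_words.
Qed.

Lemma key_ineq (a b L c al : R) : a <= al * b + c -> b <= a + L -> 0 < al ->
  al < 1/2 -> L * (1 - 2 * al) > c -> a < L.
Proof.
  intros H1 H2 H3 H4 H5.
  assert (a * (1 - al) < L * (1 - al)) by nra.
  apply Rmult_lt_reg_r with (1 - al); lra.
Qed.

Theorem theorem1p2 (G : Group) (X : list G) (g : G) :
  generates G X -> infinite_order G g ->
  forall alpha : R, s_set G X (fwd_orbit G g) (bwd_orbit G g) alpha -> 1 / 2 <= alpha.
Proof.
  intros Hgen Hinf alpha [Hpos [c [H1 _]]].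
  destruct (Rle_or_lt (1/2) alpha) as [Hle|Hlt]; auto. exfalso.
  set (h := ginv G g).
  assert (Hinfh : infinite_order G h).
  { intros n Hn E. apply (Hinf n Hn). rewrite <- (gpow_inv_cancel G g n).
    fold h. rewrite E, mul_1r. reflexivity. }
  set (f := fun j => word_length G X (gpow G h j)).
  assert (Hkey : forall k, exists n,
    INR (f (k + n)%nat) <= alpha * INR (f n) + INR c).
  { intro k. destruct (H1 k) as [n Hn]. exists n. unfold word_dist in Hn.
    unfold fwd_orbit, bwd_orbit in Hn. fold h in Hn.
    rewrite inv_one, gmul_1l in Hn.
    rewrite (inv_uniq G (gpow G g k) (gpow G h k) (gpow_inv_cancel G g k)) in Hn.
    rewrite <- gpow_add in Hn. exact Hn. }
  assert (Htri : forall k n, (f n <= f (k + n) + f k)%nat).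
  { intros k n. unfold f.
    assert (E : gpow G h n = gmul G (gpow G h (k + n)) (ginv G (gpow G h k))).
    { replace (k + n)%nat with (n + k)%nat by lia. rewrite gpow_add, <- gmul_assoc,
        mul_Vr, mul_1r. reflexivity. }
    rewrite E. eapply Nat.le_trans. apply wl_mul; auto.
    apply Nat.add_le_mono_l. apply wl_inv; auto. }
  destruct (INR_archimed (1 - 2 * alpha) (INR c)) as [Tn HTn]; [lra|].
  destruct (bounded_eventually G X h Hgen Hinfh Tn) as [N HN].
  assert (Hd : forall v k, (N <= k)%nat -> f k = v -> False).
  { intro v. induction v as [v IH] using lt_wf_ind. intros k Hk Hv.
    destruct (Hkey k) as [n Hn].
    assert (HL : INR (f k) * (1 - 2 * alpha) > INR c).
    { assert (INR Tn + 1 <= INR (f k)).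
      { rewrite <- S_INR. apply le_INR. apply HN; auto. }
      nra. }
    assert (Ht := le_INR _ _ (Htri k n)). rewrite plus_INR in Ht.
    assert (Hlt2 := key_ineq _ _ _ _ _ Hn Ht Hpos Hlt HL).
    apply INR_lt in Hlt2.
    apply (IH (f (k + n)%nat)) with (k + n)%nat; auto; lia. }
  exact (Hd _ N (le_n N) eq_refl).
Qed.
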